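(* Let $a>0$. For every $p\in(2,+\infty)$ there exist constants $M_p,\sigma_p,\gamma_p>0$ such that for every $x_0\in C^2([0,1])$, every $(d_0,d_1)\in\mathcal{U}(x_0)$ and every $t\ge0$, the classical solution $x$ of $\partial_tx(t,z)=a\,\partial_z^2x(t,z)$ on $(0,\infty)\times(0,1)$, $x(t,0)=d_0(t)$, $x(t,1)=d_1(t)$ for $t\ge0$, $x(0,z)=x_0(z)$ for $z\in[0,1]$, satisfies $\|x[t]\|_p\le M_pe^{-\sigma_pt}\|x_0\|_p+\gamma_p\max_{0\le s\le t}|d_0(s)|+\gamma_p\max_{0\le s\le t}|d_1(s)|$.
   Context: $\mathcal{U}(x_0)$ is the set of pairs $(d_0,d_1)\in C^2(\mathbb{R}_+)\times C^2(\mathbb{R}_+)$ with $d_0(0)=x_0(0)$, $d_1(0)=x_0(1)$, and $\sup_{t\ge0}|d_0(t)|<\infty$, $\sup_{t\ge0}|d_1(t)|<\infty$; for such data the problem has a unique classical solution $x\in C^0(\mathbb{R}_+\times[0,1])\cap C^{1,2}((0,\infty)\times(0,1))$ with $x[t]:=x(t,\cdot)\in C^2([0,1])$ for all $t\ge0$. $\|g\|_p=\left(\int_0^1|g(z)|^pdz\right)^{1/p}$. *)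

(* Defs.v *)
From Stdlib Require Import Reals Lra ClassicalEpsilon.
Open Scope R_scope.

(* Derivative of f at x relative to a set D (one-sided at endpoints). *)
Definition deriv_within (D : R -> Prop) (f : R -> R) (x l : R) : Prop :=
  forall eps, 0 < eps -> exists delta, 0 < delta /\
    forall h, h <> 0 -> Rabs h < delta -> D (x + h) ->
      Rabs ((f (x + h) - f x) / h - l) < eps.

Definition cont_within (D : R -> Prop) (f : R -> R) : Prop :=
  forall x, D x -> forall eps, 0 < eps -> exists delta, 0 < delta /\
    forall y, D y -> Rabs (y - x) < delta -> Rabs (f y - f x) < eps.

Definition C2_on (D : R -> Prop) (f : R -> R) : Prop :=
  exists f1 f2 : R -> R,
    (forall x, D x -> deriv_within D f x (f1 x)) /\
    (forall x, D x -> deriv_within D f1 x (f2 x)) /\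
    cont_within D f2.

Definition I01 (z : R) : Prop := 0 <= z <= 1.
Definition Rplus_set (t : R) : Prop := 0 <= t.

Definition cont2_on (D : R -> R -> Prop) (u : R -> R -> R) : Prop :=
  forall t z, D t z -> forall eps, 0 < eps -> exists delta, 0 < delta /\
    forall t' z', D t' z' -> Rabs (t' - t) < delta -> Rabs (z' - z) < delta ->
      Rabs (u t' z' - u t z) < eps.

Definition closed_dom (t z : R) : Prop := 0 <= t /\ 0 <= z <= 1.
Definition open_dom (t z : R) : Prop := 0 < t /\ 0 < z < 1.

Definition in_U (x0 d0 d1 : R -> R) : Prop :=
  C2_on Rplus_set d0 /\ C2_on Rplus_set d1 /\
  d0 0 = x0 0 /\ d1 0 = x0 1 /\
  (exists B, forall t, 0 <= t -> Rabs (d0 t) <= B) /\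
  (exists B, forall t, 0 <= t -> Rabs (d1 t) <= B).

(* x : R -> R -> R, x t z = x(t,z), is a classical solution of
   x_t = a x_zz, x(t,0)=d0 t, x(t,1)=d1 t, x(0,z)=x0 z, in
   C^0(R_+ x [0,1]) ∩ C^{1,2}((0,oo) x (0,1)) with x[t] in C^2([0,1]). *)
Definition classical_solution (a : R) (x0 d0 d1 : R -> R) (x : R -> R -> R) : Prop :=
  cont2_on closed_dom x /\
  (exists xt xz xzz : R -> R -> R,
     (forall t z, open_dom t z ->
        derivable_pt_lim (fun s => x s z) t (xt t z) /\
        derivable_pt_lim (fun w => x t w) z (xz t z) /\
        derivable_pt_lim (fun w => xz t w) z (xzz t z) /\
        xt t z = a * xzz t z) /\
     cont2_on open_dom xt /\ cont2_on open_dom xz /\ cont2_on open_dom xzz) /\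
  (forall t, 0 <= t -> C2_on I01 (x t)) /\
  (forall t, 0 <= t -> x t 0 = d0 t /\ x t 1 = d1 t) /\
  (forall z, I01 z -> x 0 z = x0 z).

(* y^q for y >= 0 with the convention 0^q = 0 (q > 0). *)
Definition nnpow (y q : R) : R := if Rlt_dec 0 y then Rpower y q else 0.

(* Riemann integral over [0,1] (0 if not Riemann integrable; the value does
   not depend on the integrability proof). *)
Definition RInt01 (f : R -> R) : R :=
  match excluded_middle_informative (inhabited (Riemann_integrable f 0 1)) with
  | left H => RiemannInt (epsilon H (fun _ => True))
  | right _ => 0
  end.

Definition Lp_norm (p : R) (g : R -> R) : R :=
  nnpow (RInt01 (fun z => nnpow (Rabs (g z)) p)) (1 / p).

(* max_{0<=s<=t} |d s| (as a supremum; it is attained for continuous d). *)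
Definition smax (d : R -> R) (t : R) : R :=
  epsilon (inhabits 0)
    (fun m => is_lub (fun y => exists s, 0 <= s <= t /\ y = Rabs (d s)) m).

(* Main.v *)
Require Import Defs.
From Stdlib Require Import Reals Lra ClassicalEpsilon.
From Coquelicot Require Import Coquelicot.
Open Scope R_scope.

Lemma loc_of (y : R) (P : R -> Prop) :
  (exists d, 0 < d /\ forall z, Rabs (z - y) < d -> P z) -> locally y P.
Proof.
  intros [d [Hd H]]. exists (mkposreal d Hd). intros z Hz. apply H. exact Hz.
Qed.

Lemma cont_eps (f : R -> R) (x : R) :
  (forall e, 0 < e -> exists d, 0 < d /\ forall y, Rabs (y - x) < d -> Rabs (f y - f x) < e) ->
  continuous f x.
Proof.
  intros H. apply continuity_pt_filterlim. intros e He.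
  destruct (H e He) as [d [Hd H']]. exists d; split; auto.
  intros y [_ Hy]. apply H'. exact Hy.
Qed.

Lemma nnpow_pos y q : 0 < y -> nnpow y q = Rpower y q.
Proof. intros. unfold nnpow. destruct (Rlt_dec 0 y); [auto|lra]. Qed.
Lemma nnpow_npos y q : y <= 0 -> nnpow y q = 0.
Proof. intros. unfold nnpow. destruct (Rlt_dec 0 y); [lra|auto]. Qed.
Lemma Rpower_pos x y : 0 < Rpower x y.
Proof. unfold Rpower. apply exp_pos. Qed.
Lemma nnpow_ge0 y q : 0 <= nnpow y q.
Proof. unfold nnpow. destruct (Rlt_dec 0 y). left; apply Rpower_pos. lra. Qed.

Lemma Rpower_small r e : 0 < r -> 0 < e -> forall h, 0 < h -> h < Rpower e (1/r) -> Rpower h r < e.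
Proof.
  intros Hr He h Hh Hlt.
  replace e with (Rpower (Rpower e (1/r)) r).
  apply Rlt_Rpower_l; lra.
  rewrite Rpower_mult. replace (1/r*r) with 1 by (field; lra). apply Rpower_1; auto.
Qed.

Lemma nnpow_cont r (hr : 0 < r) y : continuous (fun w => nnpow w r) y.
Proof.
  destruct (Rtotal_order y 0) as [Hy|[Hy|Hy]].
  - apply cont_eps. intros e He. exists (-y); split; [lra|].
    intros z Hz. rewrite !nnpow_npos; try lra.
    rewrite Rminus_0_r, Rabs_R0; auto.
    apply Rabs_def2 in Hz; lra.
  - subst. apply cont_eps. intros e He. exists (Rpower e (1/r)); split; [apply Rpower_pos|].
    intros z Hz. rewrite (nnpow_npos 0) by lra. rewrite Rminus_0_r in *.
    destruct (Rlt_dec 0 z).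
    + rewrite nnpow_pos by auto. rewrite Rabs_right.
      apply Rpower_small; auto. rewrite Rabs_right in Hz; lra.
      left; apply Rpower_pos.
    + rewrite nnpow_npos by lra. rewrite Rabs_R0; auto.
  - apply (continuous_ext_loc _ (fun w => Rpower w r)).
    apply loc_of. exists y; split; auto. intros z Hz. apply Rabs_def2 in Hz.
    rewrite nnpow_pos; auto; lra.
    apply continuity_pt_filterlim.
    apply derivable_continuous_pt. exists (r * Rpower y (r-1)).
    apply derivable_pt_lim_power; auto.
Qed.

Lemma nnpow_deriv r (hr : 1 < r) y : is_derive (fun w => nnpow w r) y (r * nnpow y (r-1)).
Proof.
  destruct (Rtotal_order y 0) as [Hy|[Hy|Hy]].
  - rewrite nnpow_npos by lra. rewrite Rmult_0_r.
    apply (is_derive_ext_loc (fun _ => 0)).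
    apply loc_of. exists (-y); split; [lra|]. intros z Hz. apply Rabs_def2 in Hz.
    rewrite nnpow_npos; auto; lra.
    apply is_derive_Reals; apply derivable_pt_lim_const.
  - subst. rewrite nnpow_npos by lra. rewrite Rmult_0_r.
    apply is_derive_Reals. intros e He.
    exists (mkposreal _ (Rpower_pos e (1/(r-1)))). intros h Hh Hlt. simpl in Hlt.
    rewrite Rplus_0_l, (nnpow_npos 0) by lra. rewrite Rminus_0_r, Rminus_0_r.
    destruct (Rlt_dec 0 h).
    + rewrite nnpow_pos by auto.
      replace (Rpower h r / h) with (Rpower h (r-1)).
      rewrite Rabs_right. apply Rpower_small; try lra. rewrite Rabs_right in Hlt; lra.
      left; apply Rpower_pos.
      replace r with ((r-1)+1) at 2 by ring. rewrite Rpower_plus, Rpower_1 by auto.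
      field. lra.
    + rewrite nnpow_npos by lra. unfold Rdiv. rewrite Rmult_0_l, Rabs_R0; auto.
  - rewrite nnpow_pos by lra.
    apply (is_derive_ext_loc (fun w => Rpower w r)).
    apply loc_of. exists y; split; auto. intros z Hz. apply Rabs_def2 in Hz.
    rewrite nnpow_pos; auto; lra.
    apply is_derive_Reals. apply derivable_pt_lim_power; auto.
Qed.

Lemma cont_eps_inv (f : R -> R) (x : R) :
  continuous f x ->
  forall e, 0 < e -> exists d, 0 < d /\ forall y, Rabs (y - x) < d -> Rabs (f y - f x) < e.
Proof.
  intros H e He. apply continuity_pt_filterlim in H.
  destruct (H e He) as [d [Hd H']]. exists d; split; auto.
  intros y Hy. destruct (Req_dec y x). subst. rewrite Rminus_diag, Rabs_R0; auto.
  apply H'. split. split. exact I. auto. exact Hy.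
Qed.

Definition wcont (a b : R) (f : R -> R) : Prop :=
  forall z, a <= z <= b -> forall e, 0 < e -> exists d, 0 < d /\
    forall y, a <= y <= b -> Rabs (y - z) < d -> Rabs (f y - f z) < e.

Definition clamp (a b z : R) := Rmax a (Rmin b z).

Lemma clamp_in a b z : a <= b -> a <= clamp a b z <= b.
Proof. intros. unfold clamp, Rmax, Rmin. repeat destruct Rle_dec; lra. Qed.
Lemma clamp_lip a b y z : a <= b -> Rabs (clamp a b y - clamp a b z) <= Rabs (y - z).
Proof.
  intros. unfold clamp, Rmax, Rmin. repeat destruct Rle_dec;
  repeat match goal with |- context [Rabs ?t] => destruct (Rcase_abs t) as [?|?];
    [rewrite (Rabs_left t) by lra | rewrite (Rabs_right t) by lra] end; lra.
Qed.
Lemma clamp_id a b z : a <= z <= b -> clamp a b z = z.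
Proof. intros. unfold clamp, Rmax, Rmin. repeat destruct Rle_dec; lra. Qed.

Lemma ex_RInt_wcont a b f : a <= b -> wcont a b f -> ex_RInt f a b.
Proof.
  intros Hab Hc.
  apply (ex_RInt_ext (fun z => f (clamp a b z))).
  { intros z Hz. rewrite Rmin_left, Rmax_right in Hz by lra. rewrite clamp_id; lra. }
  apply (@ex_RInt_continuous R_CompleteNormedModule). intros z _.
  apply cont_eps. intros e He.
  destruct (Hc (clamp a b z) (clamp_in a b z Hab) e He) as [d [Hd H]].
  exists d; split; auto. intros y Hy. apply H. apply clamp_in; auto.
  eapply Rle_lt_trans. apply clamp_lip; auto. auto.
Qed.

Lemma RInt01_eq f : ex_RInt f 0 1 -> RInt01 f = RInt f 0 1.
Proof.
  intros H. unfold RInt01.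
  destruct (excluded_middle_informative (inhabited (Riemann_integrable f 0 1))) as [Hi|Hn].
  - rewrite (RInt_Reals f 0 1 (epsilon Hi (fun _ => True))). reflexivity.
  - exfalso. apply Hn. constructor. apply ex_RInt_Reals_0. auto.
Qed.

Lemma cont2_wcont u t : cont2_on closed_dom u -> 0 <= t -> wcont 0 1 (u t).
Proof.
  intros Hu Ht z Hz e He. destruct (Hu t z (conj Ht Hz) e He) as [d [Hd H]].
  exists d; split; auto. intros y Hy Hyz. apply H; auto. split; auto.
  rewrite Rminus_diag, Rabs_R0; auto.
Qed.

Lemma cont2_comp u f : cont2_on closed_dom u -> (forall y, continuous f y) ->
  cont2_on closed_dom (fun s z => f (u s z)).
Proof.
  intros Hu Hf t z Hd e He.
  destruct (cont_eps_inv f (u t z) (Hf _) e He) as [d1 [Hd1 H1]].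
  destruct (Hu t z Hd d1 Hd1) as [d2 [Hd2 H2]].
  exists d2; split; auto.
Qed.

Lemma unif_z g t0 : cont2_on closed_dom g -> 0 <= t0 -> forall e, 0 < e ->
  exists r, 0 < r /\ forall s z, 0 <= s -> Rabs (s - t0) < r -> 0 <= z <= 1 ->
    Rabs (g s z - g t0 z) < e.
Proof.
  intros Hg Ht0 e He.
  set (P := fun y => 0 <= y <= 1 /\ exists r, 0 < r /\ forall s z, 0 <= s -> Rabs (s - t0) < r ->
     0 <= z <= y -> Rabs (g s z - g t0 z) < e).
  assert (Hloc : forall m, 0 <= m <= 1 -> exists d, 0 < d /\ forall s z, 0 <= s ->
     Rabs (s - t0) < d -> 0 <= z <= 1 -> Rabs (z - m) < d -> Rabs (g s z - g t0 z) < e).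
  { intros m Hm. destruct (Hg t0 m (conj Ht0 Hm) (e/2)) as [d [Hd H]]; [lra|].
    exists d; split; auto. intros s z Hs Hst Hz Hzm.
    assert (A1 := H s z (conj Hs Hz) Hst Hzm).
    assert (A2 := H t0 z (conj Ht0 Hz) ltac:(rewrite Rminus_diag, Rabs_R0; auto) Hzm).
    replace (g s z - g t0 z) with ((g s z - g t0 m) - (g t0 z - g t0 m)) by ring.
    eapply Rle_lt_trans. apply Rabs_triang. rewrite Rabs_Ropp. lra. }
  assert (HP0 : P 0).
  { destruct (Hloc 0) as [d [Hd H]]; [lra|]. split; [lra|]. exists d; split; auto.
    intros s z Hs Hst Hz. apply H; auto; try lra. replace z with 0 by lra.
    rewrite Rminus_diag, Rabs_R0; auto. }
  assert (Hb : bound P). { exists 1. intros y [Hy _]. lra. }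
  destruct (completeness P Hb (ex_intro _ 0 HP0)) as [m [Hub Hlub]].
  assert (Hm : 0 <= m <= 1).
  { split. apply Hub; auto. apply Hlub. intros y [Hy _]; lra. }
  destruct (Hloc m Hm) as [d [Hd Hl]].
  assert (Hy : exists y, P y /\ m - d < y).
  { apply NNPP. intros Hn. assert (m <= m - d). apply Hlub. intros y Py.
    destruct (Rle_dec y (m - d)); auto. exfalso. apply Hn. exists y; split; auto; lra. lra. }
  destruct Hy as [y [[Hy [r [Hr Hyr]]] Hym]].
  assert (HPm : P (Rmin (m + d/2) 1)).
  { split. unfold Rmin; destruct Rle_dec; lra.
    exists (Rmin r d). split. apply Rmin_pos; auto.
    intros s z Hs Hst Hz.
    assert (Hst1 : Rabs (s - t0) < r) by (eapply Rlt_le_trans; [exact Hst|apply Rmin_l]).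
    assert (Hst2 : Rabs (s - t0) < d) by (eapply Rlt_le_trans; [exact Hst|apply Rmin_r]).
    assert (Hz' : z <= m + d/2 /\ z <= 1) by (unfold Rmin in Hz; destruct Rle_dec; lra).
    destruct (Rle_dec z y). apply Hyr; auto; lra.
    apply Hl; auto; try lra. assert (y <= m) by (apply Hub; split; [lra| exists r; split; auto]).
    apply Rabs_def1; lra. }
  assert (Hle : Rmin (m + d/2) 1 <= m) by (apply Hub; auto).
  assert (Hm1 : Rmin (m + d/2) 1 = 1) by (unfold Rmin in *; destruct Rle_dec; lra).
  rewrite Hm1 in HPm. destruct HPm as [_ [r' [Hr' H']]].
  exists r'; split; auto.
Qed.

Lemma is_derive_eq (f : R -> R) x l l' : is_derive f x l -> l = l' -> is_derive f x l'.
Proof. intros H ->; exact H. Qed.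

Lemma c2_open g t z : open_dom t z -> cont2_on open_dom g -> continuity_2d_pt g t z.
Proof.
  intros [Ht Hz] Hg eps. destruct (Hg t z (conj Ht Hz) eps (cond_pos eps)) as [d [Hd H]].
  set (d' := Rmin d (Rmin t (Rmin z (1 - z)))).
  assert (Hd' : 0 < d') by (unfold d'; repeat apply Rmin_pos; lra).
  exists (mkposreal d' Hd'). simpl. intros u v Hu Hv.
  assert (d' <= d) by apply Rmin_l.
  assert (d' <= t) by (unfold d'; eapply Rle_trans; [apply Rmin_r|apply Rmin_l]).
  assert (d' <= z) by (unfold d'; eapply Rle_trans; [apply Rmin_r|]; eapply Rle_trans; [apply Rmin_r|apply Rmin_l]).
  assert (d' <= 1 - z) by (unfold d'; eapply Rle_trans; [apply Rmin_r|]; eapply Rle_trans; [apply Rmin_r|apply Rmin_r]).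
  apply Rabs_def2 in Hu. apply Rabs_def2 in Hv.
  apply H. split; lra. apply Rabs_def1; lra. apply Rabs_def1; lra.
Qed.

Lemma c2_closed g t z : open_dom t z -> cont2_on closed_dom g -> continuity_2d_pt g t z.
Proof.
  intros Ho Hg. apply c2_open; auto. intros t' z' [H1 H2] e He.
  destruct (Hg t' z' (conj (Rlt_le _ _ H1) (conj (Rlt_le _ _ (proj1 H2)) (Rlt_le _ _ (proj2 H2)))) e He)
    as [d [Hd H]].
  exists d; split; auto. intros t'' z'' [A1 A2] B1 B2. apply H; auto. split; lra.
Qed.

Lemma c2_1d g t z : continuity_2d_pt g t z -> continuous (g t) z.
Proof.
  intros H. apply cont_eps. intros e He. destruct (H (mkposreal e He)) as [d Hd].
  exists d; split. apply cond_pos. intros y Hy. apply Hd; auto.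
  rewrite Rminus_diag, Rabs_R0. apply cond_pos.
Qed.

Lemma cont_pt_of (f : R -> R) y : continuous f y -> continuity_pt f y.
Proof. intros H. apply continuity_pt_filterlim. exact H. Qed.

Section Core.
Variables (a p K : R).
Hypothesis Ha : 0 < a.
Hypothesis Hp : 2 < p.

Definition phi y := nnpow (y - K) p.
Definition phi1 y := p * nnpow (y - K) (p - 1).
Definition phi2 y := p * (p - 1) * nnpow (y - K) (p - 2).

Lemma phi_deriv y : is_derive phi y (phi1 y).
Proof.
  unfold phi, phi1.
  assert (H := is_derive_comp (fun w => nnpow w p) (fun y => y - K) y _ 1
     (nnpow_deriv p ltac:(lra) (y - K))).
  apply (is_derive_eq _ _ _ _ (H ltac:(auto_derive; auto; ring))).
  unfold scal; simpl; unfold mult; simpl; ring.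
Qed.

Lemma phi1_deriv y : is_derive phi1 y (phi2 y).
Proof.
  unfold phi1, phi2.
  assert (H := is_derive_comp (fun w => nnpow w (p-1)) (fun y => y - K) y _ 1
     (nnpow_deriv (p-1) ltac:(lra) (y - K))).
  assert (H2 := is_derive_scal _ _ p _ (H ltac:(auto_derive; auto; ring))).
  apply (is_derive_eq _ _ _ _ H2).
  unfold scal; simpl; unfold mult; simpl. replace (p - 1 - 1) with (p - 2) by ring. ring.
Qed.

Lemma cont_shift r (hr : 0 < r) y : continuous (fun y => nnpow (y - K) r) y.
Proof.
  apply (continuous_comp (fun y => y - K) (fun w => nnpow w r)).
  apply (ex_derive_continuous (fun y => y - K)). auto_derive; auto.
  apply nnpow_cont; auto.
Qed.

Lemma phi_cont y : continuous phi y.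
Proof. apply cont_shift; lra. Qed.
Lemma phi1_cont y : continuous phi1 y.
Proof. unfold phi1. apply (continuous_scal_r p (fun y => nnpow (y - K) (p-1))). apply cont_shift; lra. Qed.
Lemma phi2_cont y : continuous phi2 y.
Proof. unfold phi2. apply (continuous_scal_r (p * (p-1)) (fun y => nnpow (y - K) (p-2))). apply cont_shift; lra. Qed.

Lemma phi_zero y : y <= K -> phi y = 0 /\ phi1 y = 0 /\ phi2 y = 0.
Proof.
  intros. unfold phi, phi1, phi2. rewrite !nnpow_npos by lra. repeat split; ring.
Qed.

Lemma phi_ge0 y : 0 <= phi y.
Proof. apply nnpow_ge0. Qed.

Lemma phi_pw y w z : 0 <= z <= 1 ->
  - ((z - 1/2) * (w * phi1 y)) <= 1/2 * phi y + 1/4 * (phi2 y * w * w).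
Proof.
  intros Hz. destruct (Rle_dec y K) as [Hy|Hy].
  - destruct (phi_zero y Hy) as [A [B C]]. rewrite A, B, C. lra.
  - unfold phi, phi1, phi2. set (q := y - K). assert (Hq : 0 < q) by (unfold q; lra).
    rewrite !nnpow_pos by auto.
    set (Q := Rpower q (p - 2)). assert (HQ : 0 < Q) by apply Rpower_pos.
    replace (Rpower q p) with (Q * q * q).
    replace (Rpower q (p-1)) with (Q * q).
    2:{ unfold Q. replace (p - 1) with ((p-2) + 1) by ring. rewrite Rpower_plus, Rpower_1; auto. }
    2:{ unfold Q. replace p with (((p-2) + 1) + 1) at 2 by ring. rewrite !Rpower_plus, Rpower_1; auto. }
    assert (0 <= Q * ((1/2) * q * q + (1/4) * p * (p-1) * w * w + (z - 1/2) * w * p * q)).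
    { apply Rmult_le_pos; [lra|].
      assert (Hx : 0 <= (1/2) * (q - p * Rabs w / 2) * (q - p * Rabs w / 2)).
      { rewrite Rmult_assoc. apply Rmult_le_pos; [lra|]. apply Rle_0_sqr. }
      assert (Hw : Rabs w * Rabs w = w * w) by (rewrite <- Rabs_mult; apply Rabs_right; nra).
      assert (Hpw : (z - 1/2) * w * p * q >= - (1/2) * Rabs w * p * q).
      { assert (Rabs ((z - 1/2) * w) <= 1/2 * Rabs w).
        { rewrite Rabs_mult. apply Rmult_le_compat_r. apply Rabs_pos.
          apply Rabs_le; lra. }
        assert (- Rabs ((z-1/2)*w) <= (z-1/2)*w) by (destruct (Rcase_abs ((z-1/2)*w)); [rewrite Rabs_left | rewrite Rabs_right]; lra).
        apply Rle_ge. replace ((z - 1/2) * w * p * q) with (((z-1/2)*w) * (p*q)) by ring.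
        replace (- (1/2) * Rabs w * p * q) with ((-(1/2) * Rabs w) * (p*q)) by ring.
        apply Rmult_le_compat_r. nra. lra. }
      assert (0 <= Rabs w) by apply Rabs_pos.
      assert (Hpp : 0 <= (w*w)*(p*(p-2))) by (apply Rmult_le_pos; nra).
      assert (Hx' : 0 <= 1/2*(q*q) - 1/2*(Rabs w*p*q) + p*p*(w*w)/8).
      { rewrite <- Hw. lra. }
      lra. }
    nra.
Qed.

End Core.

Lemma RInt_plus' f g a b : ex_RInt f a b -> ex_RInt g a b ->
  RInt (fun x => f x + g x) a b = RInt f a b + RInt g a b.
Proof. intros. exact (RInt_plus f g a b H H0). Qed.
Lemma RInt_scal' f k a b : ex_RInt f a b ->
  RInt (fun x => k * f x) a b = k * RInt f a b.
Proof. intros. exact (RInt_scal f a b k H). Qed.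
Lemma RInt_opp' f a b : ex_RInt f a b ->
  RInt (fun x => - f x) a b = - RInt f a b.
Proof. intros. exact (RInt_opp f a b H). Qed.
Lemma RInt_zero a b : RInt (fun _ => 0) a b = 0.
Proof. rewrite (RInt_const (V:=R_CompleteNormedModule)). unfold scal; simpl; unfold mult; simpl. ring. Qed.

Lemma exc (f : R -> R) a b : a <= b -> (forall z, a <= z <= b -> continuous f z) -> ex_RInt f a b.
Proof.
  intros Hab H. apply (@ex_RInt_continuous R_CompleteNormedModule).
  intros z Hz. rewrite Rmin_left, Rmax_right in Hz by lra. apply H; auto.
Qed.

Lemma wcont_sub f a b c d : wcont a b f -> a <= c -> c <= d -> d <= b -> wcont c d f.
Proof.
  intros H h1 h2 h3 z Hz e He. destruct (H z ltac:(lra) e He) as [dd [Hd H']].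
  exists dd; split; auto. intros y Hy. apply H'. lra.
Qed.

Section Core2.
Variables (a p K : R) (u ut uz uzz : R -> R -> R) (T : R).
Hypothesis Ha : 0 < a.
Hypothesis Hp : 2 < p.
Hypothesis HC : cont2_on closed_dom u.
Hypothesis HD : forall t z, open_dom t z ->
  derivable_pt_lim (fun s => u s z) t (ut t z) /\
  derivable_pt_lim (fun w => u t w) z (uz t z) /\
  derivable_pt_lim (fun w => uz t w) z (uzz t z) /\ ut t z = a * uzz t z.
Hypothesis Hut : cont2_on open_dom ut.
Hypothesis Huz : cont2_on open_dom uz.
Hypothesis Huzz : cont2_on open_dom uzz.
Hypothesis HT : 0 <= T.
Hypothesis HB : forall s, 0 <= s <= T -> u s 0 < K /\ u s 1 < K.

Definition V s := RInt (fun z => phi p K (u s z)) 0 1.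

Lemma wc_phi s : 0 <= s -> wcont 0 1 (fun z => phi p K (u s z)).
Proof.
  intros Hs. apply (cont2_wcont (fun s z => phi p K (u s z))); auto.
  apply cont2_comp; auto. apply phi_cont; lra.
Qed.

Lemma bnd_loc t0 : 0 <= t0 <= T -> exists eta rho, 0 < eta < 1/2 /\ 0 < rho /\
  forall s z, 0 <= s -> Rabs (s - t0) < rho -> 0 <= z <= 1 -> (z <= eta \/ 1 - eta <= z) -> u s z < K.
Proof.
  intros Ht. destruct (HB t0 Ht) as [H0 H1].
  destruct (HC t0 0 (conj (proj1 Ht) (conj (Rle_refl 0) Rle_0_1)) (K - u t0 0) ltac:(lra)) as [d0 [Hd0 A0]].
  destruct (HC t0 1 (conj (proj1 Ht) (conj Rle_0_1 (Rle_refl 1))) (K - u t0 1) ltac:(lra)) as [d1 [Hd1 A1]].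
  set (m := Rmin d0 (Rmin d1 (1/2))).
  assert (Hm : 0 < m) by (unfold m; repeat apply Rmin_pos; lra).
  assert (m <= d0) by apply Rmin_l.
  assert (m <= d1) by (unfold m; eapply Rle_trans; [apply Rmin_r|apply Rmin_l]).
  assert (m <= 1/2) by (unfold m; eapply Rle_trans; [apply Rmin_r|apply Rmin_r]).
  exists (m/2), m. split; [lra|]. split; auto.
  intros s z Hs Hst Hz [Hz1|Hz1].
  - assert (B := A0 s z (conj Hs Hz) ltac:(lra) ltac:(apply Rabs_def1; lra)).
    apply Rabs_def2 in B. lra.
  - assert (B := A1 s z (conj Hs Hz) ltac:(lra) ltac:(apply Rabs_def1; lra)).
    apply Rabs_def2 in B. lra.
Qed.

Lemma V_loc t0 eta rho : 0 < eta < 1/2 -> 0 < rho ->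
  (forall s z, 0 <= s -> Rabs (s - t0) < rho -> 0 <= z <= 1 -> (z <= eta \/ 1 - eta <= z) -> u s z < K) ->
  forall s, 0 <= s -> Rabs (s - t0) < rho ->
  V s = RInt (fun z => phi p K (u s z)) eta (1 - eta).
Proof.
  intros He Hr Hb s Hs Hst. unfold V. set (f := fun z => phi p K (u s z)).
  assert (W := wc_phi s Hs). fold f in W.
  assert (E1 : ex_RInt f 0 eta) by (apply ex_RInt_wcont; [lra|]; apply (wcont_sub _ 0 1); auto; lra).
  assert (E2 : ex_RInt f eta (1-eta)) by (apply ex_RInt_wcont; [lra|]; apply (wcont_sub _ 0 1); auto; lra).
  assert (E3 : ex_RInt f (1-eta) 1) by (apply ex_RInt_wcont; [lra|]; apply (wcont_sub _ 0 1); auto; lra).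
  rewrite <- (RInt_Chasles f 0 eta 1 E1 (ex_RInt_Chasles _ _ _ _ E2 E3)).
  rewrite <- (RInt_Chasles f eta (1-eta) 1 E2 E3).
  assert (Z1 : RInt f 0 eta = 0).
  { transitivity (RInt (fun _ => 0) 0 eta); [|apply RInt_zero]. apply RInt_ext. intros z Hz.
    rewrite Rmin_left, Rmax_right in Hz by lra. unfold f.
    apply phi_zero. left. apply Hb; auto; lra. }
  assert (Z3 : RInt f (1-eta) 1 = 0).
  { transitivity (RInt (fun _ => 0) (1-eta) 1); [|apply RInt_zero]. apply RInt_ext. intros z Hz.
    rewrite Rmin_left, Rmax_right in Hz by lra. unfold f.
    apply phi_zero. left. apply Hb; auto; lra. }
  change (RInt f 0 eta + (RInt f eta (1 - eta) + RInt f (1 - eta) 1) = RInt f eta (1 - eta)).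
  rewrite Z1, Z3. ring.
Qed.

Lemma dcomp s z : open_dom s z -> is_derive (fun w => phi p K (u w z)) s (ut s z * phi1 p K (u s z)).
Proof.
  intros Ho. destruct (HD s z Ho) as [D1 _].
  apply (is_derive_comp (phi p K) (fun w => u w z) s _ _ (phi_deriv p K Hp _)).
  apply is_derive_Reals; auto.
Qed.

Lemma V_deriv t0 : 0 < t0 <= T -> exists eta, 0 < eta < 1/2 /\
  (forall z, 0 <= z <= 1 -> (z <= eta \/ 1 - eta <= z) -> u t0 z < K) /\
  V t0 = RInt (fun z => phi p K (u t0 z)) eta (1 - eta) /\
  is_derive V t0 (RInt (fun z => ut t0 z * phi1 p K (u t0 z)) eta (1 - eta)).
Proof.
  intros Ht. destruct (bnd_loc t0 ltac:(lra)) as [eta [rho [He [Hr Hb]]]].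
  exists eta. split; auto. split.
  { intros z Hz Hz'. apply Hb; auto; try lra. rewrite Rminus_diag, Rabs_R0; auto. }
  split. { apply (V_loc t0 eta rho); auto; try lra. rewrite Rminus_diag, Rabs_R0; auto. }
  set (f := fun s z => phi p K (u s z)).
  assert (HI : is_derive (fun s => RInt (fun z => f s z) eta (1 - eta)) t0
                 (RInt (fun z => Derive (fun w => f w z) t0) eta (1 - eta))).
  { apply is_derive_RInt_param.
    - apply loc_of. exists t0; split; [lra|]. intros s Hs z Hz.
      rewrite Rmin_left, Rmax_right in Hz by lra. apply Rabs_def2 in Hs.
      eexists. apply dcomp. split; lra.
    - intros z Hz. rewrite Rmin_left, Rmax_right in Hz by lra.
      apply (continuity_2d_pt_ext_loc (fun s v => ut s v * phi1 p K (u s v))).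
      + assert (Hm : 0 < Rmin t0 eta) by (apply Rmin_pos; lra).
        exists (mkposreal _ Hm). simpl. intros s v Hs Hv.
        assert (Rmin t0 eta <= t0) by apply Rmin_l.
        assert (Rmin t0 eta <= eta) by apply Rmin_r.
        apply Rabs_def2 in Hs. apply Rabs_def2 in Hv.
        symmetry. apply is_derive_unique. apply dcomp. split; lra.
      + apply continuity_2d_pt_mult. apply c2_open; auto. split; lra.
        apply continuity_1d_2d_pt_comp. apply cont_pt_of. apply phi1_cont; lra.
        apply c2_closed; auto. split; lra.
    - apply loc_of. exists t0; split; [lra|]. intros s Hs. apply Rabs_def2 in Hs.
      apply ex_RInt_wcont; [lra|]. apply (wcont_sub _ 0 1); try lra. apply wc_phi; lra. }
  assert (HI' : is_derive (fun s => RInt (fun z => f s z) eta (1 - eta)) t0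
                 (RInt (fun z => ut t0 z * phi1 p K (u t0 z)) eta (1 - eta))).
  { apply (is_derive_eq _ _ _ _ HI). apply RInt_ext. intros z Hz.
    rewrite Rmin_left, Rmax_right in Hz by lra. apply is_derive_unique. apply dcomp. split; lra. }
  refine (is_derive_ext_loc _ _ _ _ _ HI').
  apply loc_of. exists (Rmin rho t0). split. apply Rmin_pos; lra.
  intros s Hs. assert (Rmin rho t0 <= rho) by apply Rmin_l. assert (Rmin rho t0 <= t0) by apply Rmin_r.
  symmetry. apply (V_loc t0 eta rho); auto. apply Rabs_def2 in Hs; lra. lra.
Qed.
End Core2.

Lemma ex_RInt_scal' (f : R -> R) k a b : ex_RInt f a b -> ex_RInt (fun x => k * f x) a b.
Proof. intros H. exact (ex_RInt_scal f a b k H). Qed.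
Lemma ex_RInt_opp' (f : R -> R) a b : ex_RInt f a b -> ex_RInt (fun x => - f x) a b.
Proof. intros H. exact (ex_RInt_opp f a b H). Qed.
Lemma ex_RInt_plus' (f g : R -> R) a b : ex_RInt f a b -> ex_RInt g a b -> ex_RInt (fun x => f x + g x) a b.
Proof. intros H H'. exact (ex_RInt_plus f g a b H H'). Qed.

Section Core3.
Local Opaque phi phi1 phi2.
Variables (a p K : R) (u ut uz uzz : R -> R -> R).
Hypothesis Ha : 0 < a.
Hypothesis Hp : 2 < p.
Hypothesis HC : cont2_on closed_dom u.
Hypothesis HD : forall t z, open_dom t z ->
  derivable_pt_lim (fun s => u s z) t (ut t z) /\
  derivable_pt_lim (fun w => u t w) z (uz t z) /\
  derivable_pt_lim (fun w => uz t w) z (uzz t z) /\ ut t z = a * uzz t z.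
Hypothesis Hut : cont2_on open_dom ut.
Hypothesis Huz : cont2_on open_dom uz.
Hypothesis Huzz : cont2_on open_dom uzz.

Ltac c2t := repeat (first [ assumption | apply continuity_2d_pt_id2 | apply continuity_2d_pt_const
  | apply continuity_2d_pt_plus | apply continuity_2d_pt_minus | apply continuity_2d_pt_mult
  | (apply continuity_1d_2d_pt_comp; [apply cont_pt_of; first [apply phi_cont|apply phi1_cont|apply phi2_cont]; lra | ]) ]).

Lemma deriv_bound t0 eta : 0 < t0 -> 0 < eta < 1/2 ->
  (forall z, 0 <= z <= 1 -> (z <= eta \/ 1 - eta <= z) -> u t0 z < K) ->
  RInt (fun z => ut t0 z * phi1 p K (u t0 z)) eta (1 - eta)
  <= - (2 * a) * RInt (fun z => phi p K (u t0 z)) eta (1 - eta).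
Proof.
  intros Ht He Hb. set (b := 1 - eta).
  assert (Hab : eta <= b) by (unfold b; lra).
  assert (Hin : forall z, eta <= z <= b -> open_dom t0 z) by (intros z Hz; unfold b in Hz; split; lra).
  assert (Cs : forall z, eta <= z <= b -> continuity_2d_pt u t0 z /\ continuity_2d_pt ut t0 z /\
     continuity_2d_pt uz t0 z /\ continuity_2d_pt uzz t0 z).
  { intros z Hz. repeat split. apply c2_closed; auto. apply c2_open; auto.
    apply c2_open; auto. apply c2_open; auto. }
  set (F1 := fun z => phi p K (u t0 z)).
  set (F2 := fun z => uz t0 z * phi2 p K (u t0 z) * uz t0 z).
  set (F3 := fun z => phi1 p K (u t0 z) * uzz t0 z).
  set (F4 := fun z => (z - 1/2) * (uz t0 z * phi1 p K (u t0 z))).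
  assert (E1 : ex_RInt F1 eta b).
  { apply exc; auto. intros z Hz. destruct (Cs z Hz) as [C1 [C2 [C3 C4]]].
    unfold F1, F2, F3, F4; apply (c2_1d (fun s v => phi p K (u s v))). c2t. }
  assert (E2 : ex_RInt F2 eta b).
  { apply exc; auto. intros z Hz. destruct (Cs z Hz) as [C1 [C2 [C3 C4]]].
    unfold F1, F2, F3, F4; apply (c2_1d (fun s v => uz s v * phi2 p K (u s v) * uz s v)). c2t. }
  assert (E3 : ex_RInt F3 eta b).
  { apply exc; auto. intros z Hz. destruct (Cs z Hz) as [C1 [C2 [C3 C4]]].
    unfold F1, F2, F3, F4; apply (c2_1d (fun s v => phi1 p K (u s v) * uzz s v)). c2t. }
  assert (E4 : ex_RInt F4 eta b).
  { apply exc; auto. intros z Hz. destruct (Cs z Hz) as [C1 [C2 [C3 C4]]].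
    unfold F1, F2, F3, F4; apply (c2_1d (fun s v => (v - 1/2) * (uz s v * phi1 p K (u s v)))). c2t. }
  assert (I23 : RInt F2 eta b + RInt F3 eta b = 0).
  { rewrite <- RInt_plus' by auto.
    apply is_RInt_unique.
    assert (HG := is_RInt_derive (fun z => phi1 p K (u t0 z) * uz t0 z) (fun z => F2 z + F3 z) eta b).
    replace 0 with (minus (phi1 p K (u t0 b) * uz t0 b) (phi1 p K (u t0 eta) * uz t0 eta)).
    apply HG.
    - intros z Hz. rewrite Rmin_left, Rmax_right in Hz by auto.
      destruct (HD t0 z (Hin z Hz)) as [_ [D2 [D3 _]]].
      assert (A := is_derive_comp (phi1 p K) (u t0) z _ _ (phi1_deriv p K Hp _) (proj2 (is_derive_Reals _ _ _) D2)).
      assert (B := is_derive_mult _ _ z _ _ A (proj2 (is_derive_Reals _ _ _) D3) Rmult_comm).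
      exact B.
    - intros z Hz. rewrite Rmin_left, Rmax_right in Hz by auto.
      destruct (Cs z Hz) as [C1 [C2 [C3 C4]]].
      unfold F1, F2, F3, F4; apply (c2_1d (fun s v => uz s v * phi2 p K (u s v) * uz s v + phi1 p K (u s v) * uzz s v)). c2t.
    - rewrite (proj1 (proj2 (phi_zero p K _ (Rlt_le _ _ (Hb b ltac:(unfold b; lra) ltac:(right; unfold b; lra)))))).
      rewrite (proj1 (proj2 (phi_zero p K _ (Rlt_le _ _ (Hb eta ltac:(lra) ltac:(left; lra)))))).
      unfold minus, plus, opp; simpl. ring. }
  assert (I14 : RInt F1 eta b + RInt F4 eta b = 0).
  { rewrite <- RInt_plus' by auto.
    apply is_RInt_unique.
    assert (HG := is_RInt_derive (fun z => (z - 1/2) * phi p K (u t0 z)) (fun z => F1 z + F4 z) eta b).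
    replace 0 with (minus ((b - 1/2) * phi p K (u t0 b)) ((eta - 1/2) * phi p K (u t0 eta))).
    apply HG.
    - intros z Hz. rewrite Rmin_left, Rmax_right in Hz by auto.
      destruct (HD t0 z (Hin z Hz)) as [_ [D2 [D3 _]]].
      assert (A := is_derive_comp (phi p K) (u t0) z _ _ (phi_deriv p K Hp _) (proj2 (is_derive_Reals _ _ _) D2)).
      assert (A0 : is_derive (fun z => z - 1/2) z 1) by (auto_derive; auto; ring).
      assert (B := is_derive_mult _ _ z _ _ A0 A Rmult_comm).
      apply (is_derive_eq _ _ _ _ B). unfold F1, F4, plus, mult, scal; simpl; unfold mult; simpl. ring.
    - intros z Hz. rewrite Rmin_left, Rmax_right in Hz by auto.
      destruct (Cs z Hz) as [C1 [C2 [C3 C4]]].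
      unfold F1, F2, F3, F4; apply (c2_1d (fun s v => phi p K (u s v) + (v - 1/2) * (uz s v * phi1 p K (u s v)))). c2t.
    - rewrite (proj1 (phi_zero p K _ (Rlt_le _ _ (Hb b ltac:(unfold b; lra) ltac:(right; unfold b; lra))))).
      rewrite (proj1 (phi_zero p K _ (Rlt_le _ _ (Hb eta ltac:(lra) ltac:(left; lra))))).
      unfold minus, plus, opp; simpl. ring. }
  assert (Ipw : - RInt F4 eta b <= 1/2 * RInt F1 eta b + 1/4 * RInt F2 eta b).
  { rewrite <- RInt_opp' by auto. rewrite <- !RInt_scal' by auto. rewrite <- RInt_plus'.
    2: apply ex_RInt_scal'; auto. 2: apply ex_RInt_scal'; auto.
    apply RInt_le; auto. apply ex_RInt_opp'; auto.
    apply ex_RInt_plus'; apply ex_RInt_scal'; auto.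
    intros z Hz. unfold F1, F2, F4.
    replace (uz t0 z * phi2 p K (u t0 z) * uz t0 z) with (phi2 p K (u t0 z) * uz t0 z * uz t0 z) by ring.
    apply phi_pw; auto. unfold b in Hz; lra. }
  assert (IA : RInt (fun z => ut t0 z * phi1 p K (u t0 z)) eta b = a * RInt F3 eta b).
  { rewrite <- RInt_scal' by auto. apply RInt_ext. intros z Hz.
    rewrite Rmin_left, Rmax_right in Hz by auto.
    destruct (HD t0 z ltac:(apply Hin; lra)) as [_ [_ [_ D4]]]. rewrite D4. unfold F3. change (a * uzz t0 z * phi1 p K (u t0 z) = a * (phi1 p K (u t0 z) * uzz t0 z)). ring. }
  fold b. rewrite IA. fold F1.
  nra.
Qed.
End Core3.

Section Core4.
Variables (a p K : R) (u ut uz uzz : R -> R -> R) (T : R).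
Hypothesis Ha : 0 < a.
Hypothesis Hp : 2 < p.
Hypothesis HC : cont2_on closed_dom u.
Hypothesis HD : forall t z, open_dom t z ->
  derivable_pt_lim (fun s => u s z) t (ut t z) /\
  derivable_pt_lim (fun w => u t w) z (uz t z) /\
  derivable_pt_lim (fun w => uz t w) z (uzz t z) /\ ut t z = a * uzz t z.
Hypothesis Hut : cont2_on open_dom ut.
Hypothesis Huz : cont2_on open_dom uz.
Hypothesis Huzz : cont2_on open_dom uzz.
Hypothesis HT : 0 <= T.
Hypothesis HB : forall s, 0 <= s <= T -> u s 0 < K /\ u s 1 < K.

Let c := 2 * a.
Let E s := exp (c * s) * V p K u s.

Lemma V_ge0 s : 0 <= s -> 0 <= V p K u s.
Proof.
  intros Hs. unfold V. apply RInt_ge_0. lra.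
  apply ex_RInt_wcont. lra. apply wc_phi; auto.
  intros. apply phi_ge0.
Qed.

Lemma E_deriv s : 0 < s <= T -> exists dE, is_derive E s dE /\ dE <= 0.
Proof.
  intros Hs.
  destruct (V_deriv a p K u ut uz uzz T Hp HC HD Hut HB s Hs) as [eta [He [Hb [Veq Hd]]]].
  assert (Hbd := deriv_bound a p K u ut uz uzz Ha Hp HC HD Hut Huz Huzz s eta ltac:(lra) He Hb).
  assert (He' : is_derive (fun s => exp (c * s)) s (c * exp (c * s))) by (auto_derive; auto; ring).
  assert (HM := is_derive_mult _ _ s _ _ He' Hd Rmult_comm).
  eexists. split. exact HM.
  unfold plus, mult; simpl; unfold plus, mult; simpl.
  rewrite Veq. unfold c.
  assert (0 < exp (2 * a * s)) by apply exp_pos.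
  nra.
Qed.

Lemma E_mono eps : 0 < eps < T -> E T <= E eps.
Proof.
  intros He.
  assert (Hd : forall s, 0 < s <= T -> is_derive E s (Derive E s) /\ Derive E s <= 0).
  { intros s Hs. destruct (E_deriv s Hs) as [dE [H1 H2]].
    rewrite (is_derive_unique _ _ _ H1). auto. }
  destruct (MVT_gen E eps T (Derive E)) as [cc [Hc Heq]].
  - intros x Hx. rewrite Rmin_left, Rmax_right in Hx by lra. apply Hd; lra.
  - intros x Hx. rewrite Rmin_left, Rmax_right in Hx by lra.
    apply cont_pt_of. apply (ex_derive_continuous E). eexists. apply Hd; lra.
  - rewrite Rmin_left, Rmax_right in Hc by lra.
    assert (Derive E cc <= 0) by (apply Hd; lra).
    assert (Derive E cc * (T - eps) <= 0) by (apply Rmult_le_0_r; lra).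
    lra.
Qed.

Lemma V_rcont e : 0 < e -> exists s0, 0 < s0 /\ forall s, 0 <= s < s0 -> V p K u s <= V p K u 0 + e.
Proof.
  intros He.
  destruct (unif_z (fun s z => phi p K (u s z)) 0 ltac:(apply cont2_comp; auto; apply phi_cont; lra)
     ltac:(lra) e He) as [r [Hr H]].
  exists r; split; auto. intros s Hs. unfold V.
  assert (E0 := ex_RInt_wcont 0 1 _ ltac:(lra) (wc_phi p K u Hp HC 0 ltac:(lra))).
  assert (Es := ex_RInt_wcont 0 1 _ ltac:(lra) (wc_phi p K u Hp HC s ltac:(lra))).
  replace (RInt (fun z => phi p K (u 0 z)) 0 1 + e)
    with (RInt (fun z => phi p K (u 0 z) + e) 0 1).
  apply RInt_le; auto. lra.
  apply ex_RInt_plus'; auto. apply ex_RInt_const.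
  intros z Hz. assert (A := H s z ltac:(lra) ltac:(rewrite Rminus_0_r, Rabs_right; lra) ltac:(lra)).
  apply Rabs_def2 in A. lra.
  rewrite RInt_plus'; auto. rewrite (RInt_const (V:=R_CompleteNormedModule)).
  unfold scal; simpl; unfold mult; simpl. ring. apply ex_RInt_const.
Qed.

Lemma decay : V p K u T <= exp (- c * T) * V p K u 0.
Proof.
  assert (Hmain : E T <= V p K u 0).
  { destruct (Req_dec T 0) as [HT0|HT0].
    - unfold E. rewrite HT0, Rmult_0_r, exp_0. lra.
    - assert (Hgen : forall e, 0 < e -> E T <= exp (c * e) * (V p K u 0 + e)).
      { intros e He. destruct (V_rcont e He) as [s0 [Hs0 Hs]].
        set (s := Rmin e (Rmin s0 T) / 2).
        assert (Hm : 0 < Rmin e (Rmin s0 T)) by (repeat apply Rmin_pos; lra).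
        assert (Rmin e (Rmin s0 T) <= e) by apply Rmin_l.
        assert (Rmin e (Rmin s0 T) <= s0) by (eapply Rle_trans; [apply Rmin_r|apply Rmin_l]).
        assert (Rmin e (Rmin s0 T) <= T) by (eapply Rle_trans; [apply Rmin_r|apply Rmin_r]).
        assert (Hs1 : 0 < s < T) by (unfold s; lra).
        apply (Rle_trans _ (E s)). apply E_mono; lra.
        unfold E. apply Rmult_le_compat.
        left; apply exp_pos. apply V_ge0; lra.
        left. apply exp_increasing. assert (s < e) by (unfold s; lra). unfold c. nra.
        apply Hs. unfold s; split; lra. }
      apply Rnot_lt_le. intros Hlt.
      assert (Hc : continuous (fun e => exp (c * e) * (V p K u 0 + e)) 0).
      { apply (ex_derive_continuous (fun e => exp (c * e) * (V p K u 0 + e))). auto_derive. auto. }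
      destruct (cont_eps_inv _ _ Hc (E T - V p K u 0) ltac:(lra)) as [d [Hd Hdd]].
      set (e := Rmin (d/2) 1). assert (0 < e) by (unfold e; apply Rmin_pos; lra).
      assert (e <= d/2) by apply Rmin_l.
      assert (A := Hdd e ltac:(rewrite Rminus_0_r, Rabs_right; lra)).
      rewrite Rmult_0_r, exp_0, Rplus_0_r, Rmult_1_l in A.
      apply Rabs_def2 in A. assert (B := Hgen e H). lra. }
  unfold E in Hmain.
  replace (V p K u T) with (exp (- c * T) * (exp (c * T) * V p K u T)).
  apply Rmult_le_compat_l. left; apply exp_pos. auto.
  rewrite <- Rmult_assoc, <- exp_plus. replace (- c * T + c * T) with 0 by ring. rewrite exp_0. ring.
Qed.
End Core4.

Lemma nm_mono X Y r : X <= Y -> 0 < r -> nnpow X r <= nnpow Y r.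
Proof.
  intros H Hr. destruct (Rle_dec X 0).
  - rewrite (nnpow_npos X) by auto. apply nnpow_ge0.
  - rewrite !nnpow_pos by lra. apply Rle_Rpower_l; lra.
Qed.

Lemma nm_mult k X r : 0 < k -> 0 <= X -> nnpow (k * X) r = nnpow k r * nnpow X r.
Proof.
  intros Hk HX. destruct HX as [HX|HX].
  - rewrite !nnpow_pos; try nra. rewrite Rpower_mult_distr; auto.
  - subst. rewrite Rmult_0_r, !(nnpow_npos 0) by lra. ring.
Qed.

Lemma nm_pp K p : 0 < K -> 0 < p -> nnpow (Rpower K p) (1/p) = K.
Proof.
  intros. rewrite nnpow_pos by apply Rpower_pos. rewrite Rpower_mult.
  replace (p * (1/p)) with 1 by (field; lra). apply Rpower_1; auto.
Qed.

Lemma nm_exp y r : nnpow (exp y) r = exp (y * r).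
Proof.
  rewrite nnpow_pos by apply exp_pos. unfold Rpower. rewrite ln_exp. f_equal; ring.
Qed.

Lemma nm_le_k k r : 1 <= k -> 0 < r <= 1 -> nnpow k r <= k.
Proof.
  intros. rewrite nnpow_pos by lra. rewrite <- (Rpower_1 k) at 2 by lra.
  apply Rle_Rpower; lra.
Qed.

Lemma nm_sum X Y r : 0 <= X -> 0 <= Y -> 0 < r <= 1 ->
  nnpow (X + Y) r <= 2 * (nnpow X r + nnpow Y r).
Proof.
  intros HX HY Hr.
  assert (H2 : nnpow 2 r <= 2) by (apply nm_le_k; lra).
  assert (G1 := nnpow_ge0 X r). assert (G2 := nnpow_ge0 Y r).
  destruct (Rle_dec X Y).
  - destruct (Req_dec Y 0).
    + subst. replace X with 0 by lra. rewrite Rplus_0_r, (nnpow_npos 0) by lra. lra.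
    + apply (Rle_trans _ (nnpow (2 * Y) r)). apply nm_mono; lra.
      rewrite nm_mult by lra. nra.
  - destruct (Req_dec X 0).
    + subst. lra.
    + apply (Rle_trans _ (nnpow (2 * X) r)). apply nm_mono; lra.
      rewrite nm_mult by lra. nra.
Qed.

Lemma pw_split p K y : 2 < p -> 0 < K ->
  nnpow (Rabs y) p <= Rpower 2 p * (phi p K y + phi p K (- y) + Rpower K p).
Proof.
  intros Hp HK. unfold phi.
  set (M := Rmax (Rmax (y - K) (- y - K)) K).
  assert (HMK : K <= M) by apply Rmax_r.
  assert (HM1 : y - K <= M) by (eapply Rle_trans; [apply Rmax_l|]; apply Rmax_l).
  assert (HM2 : - y - K <= M) by (eapply Rle_trans; [apply Rmax_r|]; apply Rmax_l).
  assert (Hy : Rabs y <= 2 * M).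
  { destruct (Rcase_abs y); [rewrite Rabs_left|rewrite Rabs_right]; lra. }
  apply (Rle_trans _ (nnpow (2 * M) p)). apply nm_mono; lra.
  rewrite nm_mult by lra. rewrite (nnpow_pos 2) by lra.
  apply Rmult_le_compat_l. left; apply Rpower_pos.
  assert (A1 := nnpow_ge0 (y - K) p). assert (A2 := nnpow_ge0 (- y - K) p).
  assert (A3 : 0 < Rpower K p) by apply Rpower_pos.
  unfold M, Rmax. repeat destruct Rle_dec; try lra.
  all: try (rewrite nnpow_pos by lra; lra).
Qed.

Lemma phi_le_abs p K y : 0 <= K -> 0 < p -> phi p K y <= nnpow (Rabs y) p.
Proof.
  intros. unfold phi. apply nm_mono; auto.
  destruct (Rcase_abs y); [rewrite Rabs_left|rewrite Rabs_right]; lra.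
Qed.

Lemma smax_ge d t B : 0 <= t -> (forall s, 0 <= s -> Rabs (d s) <= B) ->
  forall s, 0 <= s <= t -> Rabs (d s) <= smax d t.
Proof.
  intros Ht HB s Hs. unfold smax.
  set (E := fun y => exists s, 0 <= s <= t /\ y = Rabs (d s)).
  assert (Hb : bound E). { exists B. intros y [s' [Hs' ->]]. apply HB. lra. }
  assert (Hn : exists y, E y). { exists (Rabs (d 0)). exists 0. split; [lra|auto]. }
  destruct (completeness E Hb Hn) as [m Hm].
  assert (Hl := epsilon_spec (inhabits 0) (fun m => is_lub E m) (ex_intro _ m Hm)).
  simpl in Hl. destruct Hl as [Hu _]. apply Hu. exists s; split; auto.
Qed.

Lemma cont2_opp D g : cont2_on D g -> cont2_on D (fun s z => - g s z).
Proof.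
  intros H t z Hd e He. destruct (H t z Hd e He) as [d [Hdd H']].
  exists d; split; auto. intros. replace (- g t' z' - - g t z) with (- (g t' z' - g t z)) by ring.
  rewrite Rabs_Ropp. auto.
Qed.

Lemma nnpow_abs_cont p : 0 < p -> forall y, continuous (fun y => nnpow (Rabs y) p) y.
Proof.
  intros Hp y. apply (continuous_comp Rabs (fun w => nnpow w p)).
  apply continuous_Rabs. apply nnpow_cont; auto.
Qed.

Lemma close_eps X Y : (forall d, 0 < d -> X <= Y + d) -> X <= Y.
Proof.
  intros H. apply Rnot_lt_le. intros Hlt. assert (A := H ((X - Y)/2) ltac:(lra)). lra.
Qed.

Lemma Rabs_def2b (u v : R) : Rabs u <= v -> - v <= u <= v.
Proof. intros H. destruct (Rcase_abs u); [rewrite Rabs_left in H|rewrite Rabs_right in H]; lra. Qed.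

Theorem mainTheorem9 (a : R) (Ha : 0 < a) :
  forall p : R, 2 < p ->
  exists Mp sigmap gammap : R, 0 < Mp /\ 0 < sigmap /\ 0 < gammap /\
    forall (x0 d0 d1 : R -> R) (x : R -> R -> R),
      C2_on I01 x0 ->
      in_U x0 d0 d1 ->
      classical_solution a x0 d0 d1 x ->
      forall t : R, 0 <= t ->
        Lp_norm p (x t) <=
          Mp * exp (- sigmap * t) * Lp_norm p x0
          + gammap * smax d0 t + gammap * smax d1 t.
Proof.
  intros p Hp. exists 8, (2 * a / p), 4.
  split; [lra|]. split; [apply Rdiv_lt_0_compat; lra|]. split; [lra|].
  intros x0 d0 d1 x _ HU Hsol t Ht.
  destruct HU as [_ [_ [_ [_ [[B0 HB0] [B1 HB1]]]]]].
  destruct Hsol as [HC [[xt [xz [xzz [HD [Hxt [Hxz Hxzz]]]]]] [_ [Hbd Hinit]]]].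
  set (S0 := smax d0 t). set (S1 := smax d1 t).
  assert (HS0 : forall s, 0 <= s <= t -> Rabs (d0 s) <= S0) by (apply (smax_ge d0 t B0); auto).
  assert (HS1 : forall s, 0 <= s <= t -> Rabs (d1 s) <= S1) by (apply (smax_ge d1 t B1); auto).
  assert (HS0p : 0 <= S0) by (eapply Rle_trans; [apply Rabs_pos|apply (HS0 0)]; lra).
  assert (HS1p : 0 <= S1) by (eapply Rle_trans; [apply Rabs_pos|apply (HS1 0)]; lra).
  set (r := 1 / p). assert (Hr : 0 < r <= 1) by (unfold r; split; [apply Rdiv_lt_0_compat|apply (Rmult_le_reg_r p); [|unfold Rdiv; rewrite Rmult_assoc, Rinv_l]]; lra).
  assert (Hwx : forall s, 0 <= s -> wcont 0 1 (fun z => nnpow (Rabs (x s z)) p)).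
  { intros s Hs. apply (cont2_wcont (fun s z => nnpow (Rabs (x s z)) p)); auto.
    apply (cont2_comp x (fun y => nnpow (Rabs y) p)); auto. apply nnpow_abs_cont; lra. }
  assert (Ex0 := ex_RInt_wcont 0 1 _ ltac:(lra) (Hwx 0 ltac:(lra))).
  assert (Ext := ex_RInt_wcont 0 1 _ ltac:(lra) (Hwx t Ht)).
  assert (Hx0eq : forall z, 0 < z < 1 -> x 0 z = x0 z) by (intros z Hz; apply Hinit; unfold I01; lra).
  assert (ExA : ex_RInt (fun z => nnpow (Rabs (x0 z)) p) 0 1).
  { apply (ex_RInt_ext (fun z => nnpow (Rabs (x 0 z)) p)); auto.
    intros z Hz. rewrite Rmin_left, Rmax_right in Hz by lra. rewrite Hx0eq; auto. }
  set (A := RInt (fun z => nnpow (Rabs (x0 z)) p) 0 1).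
  assert (HA0 : 0 <= A) by (apply RInt_ge_0; auto; [lra|intros; apply nnpow_ge0]).
  set (I := RInt (fun z => nnpow (Rabs (x t z)) p) 0 1).
  assert (HN0 : Lp_norm p x0 = nnpow A r) by (unfold Lp_norm; rewrite RInt01_eq; auto).
  assert (HNt : Lp_norm p (x t) = nnpow I r) by (unfold Lp_norm; rewrite RInt01_eq; auto).
  rewrite HN0, HNt.
  apply close_eps. intros del Hdel.
  set (K := S0 + S1 + del / 4). assert (HK : 0 < K) by (unfold K; lra).
  set (e := exp (- (2 * a) * t)). assert (He : 0 < e) by apply exp_pos.
  assert (Dp := decay a p K x xt xz xzz t Ha Hp HC HD Hxt Hxz Hxzz Ht
    ltac:(intros s Hs; destruct (Hbd s ltac:(lra)) as [E0 E1]; rewrite E0, E1;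
          assert (A0 := HS0 s Hs); assert (A1 := HS1 s Hs);
          apply Rabs_def2b in A0; apply Rabs_def2b in A1; split; unfold K; lra)).
  set (y := fun s z => - x s z).
  assert (HDn : forall t z, open_dom t z ->
    derivable_pt_lim (fun s => y s z) t ((fun t z => - xt t z) t z) /\
    derivable_pt_lim (fun w => y t w) z ((fun t z => - xz t z) t z) /\
    derivable_pt_lim (fun w => (fun t z => - xz t z) t w) z ((fun t z => - xzz t z) t z) /\
    (fun t z => - xt t z) t z = a * (fun t z => - xzz t z) t z).
  { intros t' z' Ho. destruct (HD t' z' Ho) as [D1 [D2 [D3 D4]]].
    split; [|split; [|split]].
    - apply is_derive_Reals. apply (is_derive_opp (fun s => x s z')). apply is_derive_Reals; auto.
    - apply is_derive_Reals. apply (is_derive_opp (fun w => x t' w)). apply is_derive_Reals; auto.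
    - apply is_derive_Reals. apply (is_derive_opp (fun w => xz t' w)). apply is_derive_Reals; auto.
    - simpl. rewrite D4. ring. }
  assert (Dn := decay a p K y _ _ _ t Ha Hp (cont2_opp _ _ HC) HDn
    (cont2_opp _ _ Hxt) (cont2_opp _ _ Hxz) (cont2_opp _ _ Hxzz) Ht
    ltac:(intros s Hs; unfold y; destruct (Hbd s ltac:(lra)) as [E0 E1]; rewrite E0, E1;
          assert (A0 := HS0 s Hs); assert (A1 := HS1 s Hs);
          apply Rabs_def2b in A0; apply Rabs_def2b in A1; split; unfold K; lra)).
  fold e in Dp, Dn.
  assert (V0 : forall (g : R -> R -> R), cont2_on closed_dom g ->
     (forall z, 0 < z < 1 -> Rabs (g 0 z) = Rabs (x0 z)) -> V p K g 0 <= A).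
  { intros g Hg Hgz. unfold V, A.
    apply (Rle_trans _ (RInt (fun z => nnpow (Rabs (g 0 z)) p) 0 1)).
    - apply RInt_le. lra. apply ex_RInt_wcont. lra. apply wc_phi; auto; lra.
      apply ex_RInt_wcont. lra. apply (cont2_wcont (fun s z => nnpow (Rabs (g s z)) p)); [|lra].
      apply (cont2_comp g (fun y => nnpow (Rabs y) p)); auto. apply nnpow_abs_cont; lra.
      intros z Hz. apply phi_le_abs; lra.
    - right. apply RInt_ext. intros z Hz. rewrite Rmin_left, Rmax_right in Hz by lra.
      rewrite Hgz; auto. }
  assert (Vp0 : V p K x 0 <= A) by (apply V0; auto; intros; rewrite Hx0eq; auto).
  assert (Vn0 : V p K y 0 <= A).
  { apply V0. apply cont2_opp; auto. intros z Hz. unfold y. rewrite Rabs_Ropp, Hx0eq; auto. }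
  set (C := Rpower 2 p).
  assert (HI : I <= C * (V p K x t + V p K y t + Rpower K p)).
  { unfold I.
    assert (Ep := ex_RInt_wcont 0 1 _ ltac:(lra) (wc_phi p K x Hp HC t Ht)).
    assert (En := ex_RInt_wcont 0 1 _ ltac:(lra) (wc_phi p K y Hp (cont2_opp _ _ HC) t Ht)).
    assert (Eg : ex_RInt (fun z => C * (phi p K (x t z) + phi p K (y t z) + Rpower K p)) 0 1).
    { apply ex_RInt_scal'. apply ex_RInt_plus'. apply ex_RInt_plus'; auto. apply ex_RInt_const. }
    apply (Rle_trans _ (RInt (fun z => C * (phi p K (x t z) + phi p K (y t z) + Rpower K p)) 0 1)).
    - apply RInt_le; auto. lra. intros z Hz. unfold y. apply pw_split; auto.
    - right. rewrite RInt_scal'. rewrite RInt_plus'. rewrite RInt_plus'; auto.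
      rewrite (RInt_const (V:=R_CompleteNormedModule)). unfold V. unfold scal; simpl; unfold mult; simpl. ring.
      all: try apply ex_RInt_const. apply ex_RInt_plus'; auto.
      apply ex_RInt_plus'; auto. apply ex_RInt_plus'; auto. apply ex_RInt_const. }
  assert (HI2 : I <= C * (2 * (e * A) + Rpower K p)).
  { eapply Rle_trans. apply HI. apply Rmult_le_compat_l. left; apply Rpower_pos.
    assert (0 <= V p K x t) by (apply V_ge0; auto).
    nra. }
  assert (HCr : nnpow C r = 2) by (unfold C, r; apply nm_pp; lra).
  assert (HKr : nnpow (Rpower K p) r = K) by (unfold r; apply nm_pp; lra).
  assert (H2r : nnpow 2 r <= 2) by (apply nm_le_k; lra).
  assert (Her : nnpow e r = exp (- (2 * a / p) * t)).
  { unfold e. rewrite nm_exp. f_equal. unfold r. field. lra. }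
  assert (G1 := nnpow_ge0 A r). assert (G2 := exp_pos (- (2 * a / p) * t)).
  apply (Rle_trans _ (nnpow (C * (2 * (e * A) + Rpower K p)) r)). apply nm_mono; lra.
  rewrite nm_mult; [|unfold C; apply Rpower_pos|]. 2: { assert (0 < Rpower K p) by apply Rpower_pos. nra. }
  rewrite HCr.
  assert (HS := nm_sum (2 * (e * A)) (Rpower K p) r ltac:(nra) ltac:(left; apply Rpower_pos) Hr).
  rewrite HKr in HS.
  rewrite (nm_mult 2) in HS by nra. rewrite (nm_mult e) in HS by lra. rewrite Her in HS.
  assert (0 <= nnpow 2 r) by apply nnpow_ge0.
  assert (nnpow 2 r * (exp (- (2 * a / p) * t) * nnpow A r) <= 2 * (exp (- (2 * a / p) * t) * nnpow A r)).
  { apply Rmult_le_compat_r; auto. apply Rmult_le_pos; lra. }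
  unfold K in *. lra.
Qed.
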